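(* Let $y_0,z_0\in\mathbb{R}^n$ be row vectors with $y_0[i]\ge0$, $z_0[i]\ge0$ for $i\in\mathcal{V}$, $y_0[(i,j)]=z_0[(i,j)]=0$ for $(i,j)\in\mathcal{E}$, and $\sum_j z_0[j]>0$, and define $y_k=y_{k-1}M_k$, $z_k=z_{k-1}M_k$ for $k\ge1$ (same $M_k$ in both). Let $\mu_z$ satisfy $0<\mu_z\le\sum_j z_0[j]$, let $c=\min\{M[a,b]: M\in\mathcal{M},\,M[a,b]>0\}$, let $l$ be a positive integer such that for every $i\in\mathcal{V}$ there exist $l$ matrices in $\mathcal{M}$ (possibly repeated) whose product, in some order, has all entries of its column indexed by $i$ strictly positive, and set $\mu=\mu_z c^l/n$. For $i\in\mathcal{V}$, let $\tau_i^1<\tau_i^2<\cdots$ be the successive times $k$ at which $z_k[i]\ge\mu$, and let $\pi_i[t]=y_{\tau_i^t}[i]/z_{\tau_i^t}[i]$. Then for each $i\in\mathcal{V}$, with probability $1$, $\pi_i[t]$ converges as $t\to\infty$ to $\pi^*=\dfrac{\sum_j y_0[j]}{\sum_j z_0[j]}$.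
   Context: Let $\mathcal{G}=(\mathcal{V},\mathcal{E})$ be a strongly connected directed graph with $\mathcal{V}=\{1,\dots,m\}$, with a self-loop $(i,i)\in\mathcal{E}$ at every node. Let $\mathcal{O}_i=\{j:(i,j)\in\mathcal{E}\}$ and $D_i=|\mathcal{O}_i|$. At each time step $k\ge1$ each link $(i,j)\in\mathcal{E}$ is reliable with probability $q_{ij}\in(0,1]$, independently across links and across time steps; let $X_k[i,j]=1$ if $(i,j)$ is reliable at step $k$ and $0$ otherwise. Let $n=m+|\mathcal{E}|$ and index vector entries and rows/columns of $n\times n$ matrices by $\mathcal{V}\cup\mathcal{E}$ (each link $(i,j)$ is an additional ''virtual buffer'' index). The random matrix $M_k$ is defined by: for $i\in\mathcal{V}$ and $(i,j)\in\mathcal{E}$, $M_k[i,j]=X_k[i,j]/D_i$ and $M_k[i,(i,j)]=(1-X_k[i,j])/D_i$, all other entries of row $i$ being $0$; for $(i,j)\in\mathcal{E}$, $M_k[(i,j),j]=X_k[i,j]$ and $M_k[(i,j),(i,j)]=1-X_k[i,j]$, all other entries of row $(i,j)$ being $0$. $\mathcal{M}$ denotes the finite set of all $2^{|\mathcal{E}|}$ matrices obtainable this way. The sums $\sum_j$ over $y_0,z_0$ range over all $n$ indices (equivalently over $\mathcal{V}$). The times $\tau_i^t$ are well defined (infinitely many) with probability $1$. *)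

(* Defs.v *)
From HB Require Import structures.
From mathcomp Require Import all_boot all_order all_algebra.
From mathcomp Require Import all_classical all_reals all_analysis.
Set Implicit Arguments. Unset Strict Implicit. Unset Printing Implicit Defensive.
Import Order.TTheory GRing.Theory Num.Theory.
Import numFieldNormedType.Exports.
Local Open Scope classical_set_scope.
Local Open Scope ring_scope.

(* Virtual buffers: one per link. *)
Definition edge (m : nat) (E : {set 'I_m * 'I_m}) := {p : 'I_m * 'I_m | p \in E}.
(* Index set V u E of the n = m + |E| coordinates. *)
Definition idx (m : nat) (E : {set 'I_m * 'I_m}) := ('I_m + edge E)%type.

Definition outdeg (m : nat) (E : {set 'I_m * 'I_m}) (i : 'I_m) : nat :=
  #|[set j | (i, j) \in E]|.

(* The matrix M determined by the reliability indicators x (only the values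
   of x on links matter). *)
Definition Mof (R : realType) (m : nat) (E : {set 'I_m * 'I_m})
    (x : 'I_m * 'I_m -> bool) (a b : idx E) : R :=
  match a, b with
  | inl i, inl j => if (i, j) \in E then (x (i, j))%:R / (outdeg E i)%:R else 0
  | inl i, inr e => if (val e).1 == i
                    then (1 - (x (val e))%:R) / (outdeg E i)%:R else 0
  | inr e, inl j => if (val e).2 == j then (x (val e))%:R else 0
  | inr e, inr e' => if e == e' then 1 - (x (val e))%:R else 0
  end.

Definition inMset (R : realType) (m : nat) (E : {set 'I_m * 'I_m})
    (A : idx E -> idx E -> R) : Prop :=
  exists x : 'I_m * 'I_m -> bool, A = Mof R x.

Definition vmul (R : realType) (I : finType) (y : I -> R) (A : I -> I -> R) : I -> R :=
  fun b => \sum_a y a * A a b.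
Definition mmul (R : realType) (I : finType) (A B : I -> I -> R) : I -> I -> R :=
  fun a b => \sum_k A a k * B k b.
Definition mid (R : realType) (I : finType) : I -> I -> R := fun a b => (a == b)%:R.
Definition mprod (R : realType) (I : finType) (s : seq (I -> I -> R)) : I -> I -> R :=
  foldr (@mmul R I) (@mid R I) s.

Fixpoint traj (R : realType) (m : nat) (E : {set 'I_m * 'I_m})
    (x : nat -> 'I_m * 'I_m -> bool) (v0 : idx E -> R) (k : nat) : idx E -> R :=
  match k with
  | 0 => v0
  | k'.+1 => vmul (traj x v0 k') (Mof R (x k'.+1))
  end.

(* Successive hitting times of a boolean sequence s:
   tau s 0 < tau s 1 < ... are the successive k with s k (when they exist). *)
Definition next_hit (s : nat -> bool) (k0 : nat) : nat :=
  match pselect (exists k, (k0 <= k)%N && s k) with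
  | left h => ex_minn h
  | right _ => k0
  end.
Fixpoint tau (s : nat -> bool) (t : nat) : nat :=
  match t with
  | 0 => next_hit s 0
  | t'.+1 => next_hit s (tau s t').+1
  end.

Definition mutually_independent (R : realType) (d : measure_display)
    (T : measurableType d) (P : probability T R) (I : eqType)
    (J : set I) (Y : I -> T -> bool) : Prop :=
  forall (s : seq I) (b : I -> bool), uniq s -> (forall i, i \in s -> J i) ->
    P (\bigcap_(i in [set` s]) [set w | Y i w = b i]) =
    ((\prod_(i <- s) fine (P [set w | Y i w = b i]))%:E)%E.

(* Main.v *)
Require Import Defs.
From HB Require Import structures.
From mathcomp Require Import all_boot all_order all_algebra.
From mathcomp Require Import all_classical all_reals all_analysis.
From mathcomp Require Import ring lra zify.
Import Order.TTheory GRing.Theory Num.Theory.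
Import numFieldNormedType.Exports.
Local Open Scope classical_set_scope.
Local Open Scope ring_scope.
Lemma outdegE m (E : {set 'I_m * 'I_m}) i : outdeg E i = #|[set j | (i, j) \in E]%SET|.
Proof. rewrite /outdeg; apply: eq_card => j. rewrite inE; apply/idP/idP; rewrite in_setE /=. all: by []. Qed.

Lemma Mof_ge0 (R : realType) m (E : {set 'I_m * 'I_m}) x (a b : idx E) :
  0 <= Mof R x a b.
Proof.
case: a => [i|e]; case: b => [j|e'] /=; rewrite /Mof;
  repeat case: ifP => _; rewrite ?lexx //;
  try apply: divr_ge0; rewrite ?ler0n ?subr_ge0 //; by case: (x _).
Qed.

Lemma Mof_row1 (R : realType) m (E : {set 'I_m * 'I_m}) x
  (hl : forall i, (i,i) \in E) (a : idx E) : \sum_b Mof R x a b = 1.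
Proof.
rewrite big_sumType /=. case: a => [i|e] /=.
- have -> : \sum_(e : edge E) Mof R x (inl i) (inr e) =
     \sum_(p in E) (if p.1 == i then (1 - (x p)%:R) / (outdeg E i)%:R else 0).
    by rewrite [RHS]big_sub.
  rewrite [X in _ + X]big_mkcond /=.
  rewrite (_ : \sum_(p : 'I_m * 'I_m) _ = \sum_(a < m) \sum_(j < m)
     (if (a, j) \in E then (if a == i then (1 - (x (a,j))%:R) / (outdeg E i)%:R else 0) else 0)); last first.
    by rewrite pair_bigA; apply: eq_bigr => -[].
  rewrite [X in _ + X](bigD1 i) //= [X in _ + (_ + X)]big1 ?addr0; last first.
    move=> a /negbTE ai; apply: big1 => j _; rewrite ai; by case: ifP.
  rewrite -big_split /=.
  have -> : \sum_(j < m) (Mof R (E:=E) x (inl i) (inl j) +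
      (if (i, j) \in E then if i == i then (1 - (x (i, j))%:R) / (outdeg E i)%:R else 0 else 0))
      = \sum_(j in [set j | (i, j) \in E]%SET) (outdeg E i)%:R^-1.
    rewrite [in RHS]big_mkcond /=; apply: eq_bigr => j _; rewrite /Mof inE eqxx.
    case: ifP => _; last by rewrite addr0.
    by rewrite -mulrDl addrC subrK mul1r.
  have hD0 : (0 < outdeg E i)%N.
    rewrite outdegE; apply/card_gt0P; exists i; rewrite inE; exact: hl.
  have hD : (outdeg E i)%:R != 0 :> R by rewrite pnatr_eq0 -lt0n.
  rewrite sumr_const -outdegE -[(_^-1) *+ _]mulr_natl (mulfV hD) //.
- rewrite (bigD1 (val e).2) //= eqxx [X in _ + X + _]big1; last first.
    by move=> j /negbTE h; rewrite eq_sym h.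
  rewrite addr0 (bigD1 e) //= eqxx big1; last first.
    by move=> e' /negbTE h; rewrite eq_sym h.
  by rewrite addr0 addrC subrK.
Qed.



Set Implicit Arguments. Unset Strict Implicit. Unset Printing Implicit Defensive.

Definition nonneg (R : realType) (I : finType) (A : I -> I -> R) :=
  forall a b, 0 <= A a b.
Definition rowsum (R : realType) (I : finType) (A : I -> I -> R) (r : R) :=
  forall a, \sum_b A a b = r.

Lemma vmul_sum (R : realType) (I : finType) (A : I -> I -> R) v :
  rowsum A 1 -> \sum_b vmul v A b = \sum_a v a.
Proof.
move=> hA; rewrite /vmul exchange_big /=; apply: eq_bigr => a _.
by rewrite -mulr_sumr hA mulr1.
Qed.

Lemma vmul_ge0 (R : realType) (I : finType) (A : I -> I -> R) v b :
  nonneg A -> (forall a, 0 <= v a) -> 0 <= vmul v A b.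
Proof. by move=> hA hv; apply: sumr_ge0 => a _; apply: mulr_ge0. Qed.

Lemma vmul_norm (R : realType) (I : finType) (A : I -> I -> R) v r :
  nonneg A -> rowsum A r -> \sum_b `|vmul v A b| <= r * \sum_a `|v a|.
Proof.
move=> hA hr; apply: (@le_trans _ _ (\sum_b \sum_a `|v a| * A a b)).
  apply: ler_sum => b _; apply: (le_trans (ler_norm_sum _ _ _)).
  by apply: ler_sum => a _; rewrite normrM (ger0_norm (hA a b)).
rewrite exchange_big /= mulr_sumr; apply: ler_sum => a _.
by rewrite -mulr_sumr hr mulrC.
Qed.

Lemma vmul_contract (R : realType) (I : finType) (A : I -> I -> R) v i0 g :
  nonneg A -> rowsum A 1 -> (forall a, g <= A a i0) -> \sum_a v a = 0 ->
  \sum_b `|vmul v A b| <= (1 - g) * \sum_a `|v a|.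
Proof.
move=> hA hr hg hv.
pose A' := fun a b => A a b - g * (b == i0)%:R.
have -> : vmul v A = vmul v A'.
  apply: funext => b; rewrite /vmul /A'.
  under [RHS]eq_bigr do rewrite mulrBr.
  by rewrite sumrB -mulr_suml hv mul0r subr0.
apply: vmul_norm.
  move=> a b; rewrite /A' subr_ge0; case: eqP => [->|_]; first by rewrite mulr1.
  by rewrite mulr0.
move=> a; rewrite /A' sumrB hr; congr (_ - _).
rewrite (bigD1 i0) //= eqxx mulr1 big1 ?addr0 // => b /negbTE ->.
by rewrite mulr0.
Qed.

Lemma vmul_lin (R : realType) (I : finType) (A : I -> I -> R) v w k :
  vmul (fun a => v a - k * w a) A = (fun b => vmul v A b - k * vmul w A b).
Proof.
apply: funext => b; rewrite /vmul mulr_sumr -sumrB; apply: eq_bigr => a _.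
by rewrite mulrBl mulrA.
Qed.

Lemma vmul_mmul (R : realType) (I : finType) (A B : I -> I -> R) v :
  vmul v (mmul A B) = vmul (vmul v A) B.
Proof.
apply: funext => b; rewrite /vmul /mmul.
under eq_bigr do rewrite mulr_sumr.
rewrite exchange_big /=; apply: eq_bigr => k _.
by rewrite mulr_suml; apply: eq_bigr => a _; rewrite mulrA.
Qed.

Lemma mmulA (R : realType) (I : finType) (A B C : I -> I -> R) :
  mmul A (mmul B C) = mmul (mmul A B) C.
Proof.
apply: funext => a; apply: funext => b; rewrite /mmul.
under eq_bigr do rewrite mulr_sumr.
rewrite exchange_big /=; apply: eq_bigr => k _.
by rewrite mulr_suml; apply: eq_bigr => j _; rewrite mulrA.
Qed.

Lemma mmul1m (R : realType) (I : finType) (A : I -> I -> R) : mmul (@mid R I) A = A.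
Proof.
apply: funext => a; apply: funext => b; rewrite /mmul /mid.
rewrite (bigD1 a) //= eqxx mul1r big1 ?addr0 // => k /negbTE.
by rewrite eq_sym => ->; rewrite mul0r.
Qed.

Lemma mmulm1 (R : realType) (I : finType) (A : I -> I -> R) : mmul A (@mid R I) = A.
Proof.
apply: funext => a; apply: funext => b; rewrite /mmul /mid.
rewrite (bigD1 b) //= eqxx mulr1 big1 ?addr0 // => k /negbTE ->.
by rewrite mulr0.
Qed.

Lemma mprod_nseqS (R : realType) (I : finType) (A : I -> I -> R) n :
  mprod (nseq n.+1 A) = mmul (mprod (nseq n A)) A.
Proof.
elim: n => [|n IH] /=; first by rewrite mmul1m mmulm1.
change (mmul A (mprod (nseq n.+1 A)) = mmul (mmul A (mprod (nseq n A))) A).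
by rewrite IH mmulA.
Qed.

Lemma mmul_nonneg (R : realType) (I : finType) (A B : I -> I -> R) :
  nonneg A -> nonneg B -> nonneg (mmul A B).
Proof. by move=> hA hB a b; apply: sumr_ge0 => k _; apply: mulr_ge0. Qed.

Lemma mmul_rowsum (R : realType) (I : finType) (A B : I -> I -> R) :
  rowsum A 1 -> rowsum B 1 -> rowsum (mmul A B) 1.
Proof.
move=> hA hB a; rewrite /mmul exchange_big /=.
under eq_bigr do rewrite -mulr_sumr hB mulr1.
exact: hA.
Qed.

Lemma mid_nonneg (R : realType) (I : finType) : nonneg (@mid R I).
Proof. by move=> a b; rewrite /mid ler0n. Qed.

Lemma mid_rowsum (R : realType) (I : finType) : rowsum (@mid R I) 1.
Proof.
move=> a; rewrite /mid (bigD1 a) //= eqxx big1 ?addr0 // => b /negbTE.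
by rewrite eq_sym => ->.
Qed.

Lemma mmul_pos (R : realType) (I : finType) (A B : I -> I -> R) a b :
  nonneg A -> nonneg B -> 0 < mmul A B a b -> exists k, 0 < A a k /\ 0 < B k b.
Proof.
move=> hA hB h; have [//|hn] := pselect (exists k, 0 < A a k /\ 0 < B k b).
exfalso; move: h; apply/negP; rewrite -leNgt.
rewrite /mmul; apply: sumr_le0 => k _.
have [h1|h1] := ltP 0 (A a k).
  have [h2|h2] := ltP 0 (B k b); first by case: hn; exists k.
  by rewrite pmulr_rle0 //; apply: h2.
have -> : A a k = 0 by apply/eqP; rewrite eq_le h1 hA.
by rewrite mul0r.
Qed.

Lemma mmul_pos2 (R : realType) (I : finType) (A B : I -> I -> R) a b k :
  nonneg A -> nonneg B -> 0 < A a k -> 0 < B k b -> A a k * B k b <= mmul A B a b.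
Proof.
move=> hA hB h1 h2; rewrite /mmul (bigD1 k) //= lerDl.
by apply: sumr_ge0 => j _; apply: mulr_ge0.
Qed.


Lemma mmul_pos3 (R : realType) (I : finType) (A B : I -> I -> R) a b k :
  nonneg A -> nonneg B -> 0 < A a k -> 0 < B k b -> 0 < mmul A B a b.
Proof.
move=> hA hB h1 h2; apply: (lt_le_trans _ (@mmul_pos2 _ _ A B a b k hA hB h1 h2)).
exact: mulr_gt0.
Qed.

Lemma mprod_nonneg (R : realType) (I : finType) (s : seq (I -> I -> R)) :
  (forall A, A \in s -> nonneg A) -> nonneg (mprod s).
Proof.
elim: s => [|A s IH] hs /=; first exact: mid_nonneg.
apply: mmul_nonneg; first by apply: hs; rewrite inE eqxx.
by apply: IH => B hB; apply: hs; rewrite inE hB orbT.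
Qed.

Lemma mprod_rowsum (R : realType) (I : finType) (s : seq (I -> I -> R)) :
  (forall A, A \in s -> rowsum A 1) -> rowsum (mprod s) 1.
Proof.
elim: s => [|A s IH] hs /=; first exact: mid_rowsum.
apply: mmul_rowsum; first by apply: hs; rewrite inE eqxx.
by apply: IH => B hB; apply: hs; rewrite inE hB orbT.
Qed.

Lemma mprod_lb (R : realType) (I : finType) (s : seq (I -> I -> R)) c :
  0 < c -> (forall A, A \in s -> nonneg A /\ forall a b, 0 < A a b -> c <= A a b) ->
  forall a b, 0 < mprod s a b -> c ^+ size s <= mprod s a b.
Proof.
move=> c0; elim: s => [|A s IH] hs a b /=.
  rewrite /mid expr0; case: (a == b) => //=; by rewrite ltxx.
have hA : nonneg A /\ forall a b, 0 < A a b -> c <= A a b.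
  by apply: hs; rewrite inE eqxx.
have hs' : forall B, B \in s -> nonneg B /\ forall a b, 0 < B a b -> c <= B a b.
  by move=> B hB; apply: hs; rewrite inE hB orbT.
have hP : nonneg (mprod s) by apply: mprod_nonneg => B /hs' [].
move=> h; have [k [h1 h2]] := mmul_pos hA.1 hP h.
apply: le_trans (mmul_pos2 hA.1 hP h1 h2).
rewrite exprS; apply: ler_pM; rewrite ?(ltW c0) ?exprn_ge0 ?(ltW c0) //.
  exact: hA.2.
exact: IH.
Qed.

Lemma vmul_mid (R : realType) (I : finType) (v : I -> R) : vmul v (@mid R I) = v.
Proof.
apply: funext => b; rewrite /vmul /mid (bigD1 b) //= eqxx mulr1 big1 ?addr0 // => a /negbTE ->.
by rewrite mulr0.
Qed.

Lemma Mof_true (R : realType) m (E : {set 'I_m * 'I_m}) (x : 'I_m * 'I_m -> bool) :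
  (forall e, e \in E -> x e) -> Mof R x = Mof R (E:=E) (fun _ => true).
Proof.
move=> hx; apply: funext => a; apply: funext => b.
case: a => [i|e]; case: b => [j|e'] /=; rewrite /Mof.
- by case: ifP => // h; rewrite (hx _ h).
- by rewrite (hx _ (valP e')).
- by rewrite (hx _ (valP e)).
- by rewrite (hx _ (valP e)).
Qed.

Lemma outdeg_gt0 m (E : {set 'I_m * 'I_m}) a j : (a, j) \in E -> (0 < outdeg E a)%N.
Proof. by move=> h; rewrite outdegE; apply/card_gt0P; exists j; rewrite inE. Qed.

Lemma R1_ll (R : realType) m (E : {set 'I_m * 'I_m}) a j : (a, j) \in E ->
  0 < Mof R (E:=E) (fun _ => true) (inl a) (inl j).
Proof.
move=> h; rewrite /Mof h mul1r invr_gt0 ltr0n; exact: outdeg_gt0 h.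
Qed.

Lemma R1_rl (R : realType) m (E : {set 'I_m * 'I_m}) (e : edge E) :
  0 < Mof R (E:=E) (fun _ => true) (inr e) (inl (val e).2).
Proof. by rewrite /Mof eqxx ltr01. Qed.

Lemma R1_pos (R : realType) m (E : {set 'I_m * 'I_m}) (e : edge E) c :
  0 < Mof R (E:=E) (fun _ => true) (inr e) c -> c = inl (val e).2.
Proof.
case: c => [j|e'] /=; rewrite /Mof.
  by case: eqP => [->|]; rewrite ?ltxx.
by case: eqP => _; rewrite ?subrr ?ltxx.
Qed.


Definition R1 (R : realType) m (E : {set 'I_m * 'I_m}) := Mof R (E:=E) (fun _ => true).
Arguments R1 R {m} E.

Lemma R1_nonneg (R : realType) m (E : {set 'I_m * 'I_m}) : nonneg (R1 R E).
Proof. move=> a b; exact: Mof_ge0. Qed.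

Lemma Mnonneg (R : realType) m (E : {set 'I_m * 'I_m}) x : nonneg (Mof R (E:=E) x).
Proof. move=> a b; exact: Mof_ge0. Qed.

Lemma R1n_nonneg (R : realType) m (E : {set 'I_m * 'I_m}) k : nonneg (mprod (nseq k (R1 R E))).
Proof. apply: mprod_nonneg => A; rewrite mem_nseq => /andP[_ /eqP ->]; exact: R1_nonneg. Qed.

Ltac nn := match goal with
 | |- nonneg (R1 _ _) => exact: R1_nonneg
 | |- nonneg (mprod (nseq ?k (R1 ?R ?E))) => exact: (@R1n_nonneg R _ E k)
 | |- nonneg (mmul (R1 ?R ?E) (mprod (nseq ?k _))) => exact: (@R1n_nonneg R _ E k.+1)
 end.

Lemma Tt_mono (R : realType) m (E : {set 'I_m * 'I_m}) (hl : forall i, (i,i) \in E) i k b :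
  0 < mprod (nseq k (R1 R E)) b (inl i) -> 0 < mprod (nseq k.+1 (R1 R E)) b (inl i).
Proof.
elim: k b => [|k IH] b /=.
  rewrite /mid; case: eqP => [->|]; last by rewrite ltxx.
  move=> _; apply: (@mmul_pos3 _ _ _ _ _ _ (inl i)) => //; try exact: R1_nonneg.
  - exact: R1_ll.
  - by rewrite eqxx ltr01.
move=> h; have [c [h1 h2]] := mmul_pos (@R1_nonneg R _ E) (@R1n_nonneg R _ E k) h.
apply: (@mmul_pos3 _ _ _ _ _ _ c) => //; try nn.
- exact: IH.
Qed.

Lemma Tt_step (R : realType) m (E : {set 'I_m * 'I_m}) (hl : forall i, (i,i) \in E) i k x a b :
  0 < Mof R (E:=E) x a b -> 0 < mprod (nseq k (R1 R E)) b (inl i) ->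
  0 < mprod (nseq k.+1 (R1 R E)) a (inl i).
Proof.
move=> hab hb.
case: a hab => [a0|e]; case: b hb => [j|e'] hb /=; rewrite /Mof.
- case: ifP => hE; last by rewrite ltxx.
  move=> _; apply: (@mmul_pos3 _ _ _ _ _ _ (inl j)) => //; try nn.
  + exact: R1_ll.
- case: eqP => he; last by rewrite ltxx.
  move=> _; move: hb; case: k => [|k] /=; first by rewrite /mid /= ltxx.
  move=> hb; have [c [h1 h2]] := mmul_pos (@R1_nonneg R _ E) (@R1n_nonneg R _ E k) hb.
  have hc := R1_pos h1; subst c.
  have h3 := Tt_mono hl h2.
  apply: (@mmul_pos3 _ _ _ _ _ _ (inl (val e').2)) => //; try nn.
  + apply: R1_ll; rewrite -he -surjective_pairing; exact: (valP e').
- case: ((sval e).2 =P j) => he; last by rewrite ltxx.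
  move=> _; subst j; apply: (@mmul_pos3 _ _ _ _ _ _ (inl (val e).2)) => //; try nn.
  + exact: R1_rl.
- case: (e =P e') => he; last by rewrite ltxx.
  move=> _; subst e'; exact: Tt_mono.
Qed.

Lemma Tt_main (R : realType) m (E : {set 'I_m * 'I_m}) (hl : forall i, (i,i) \in E) i
  (s : seq (idx E -> idx E -> R)) :
  (forall A, A \in s -> inMset A) -> forall a, 0 < mprod s a (inl i) ->
  0 < mprod (nseq (size s) (R1 R E)) a (inl i).
Proof.
elim: s => [|A s IH] hs a //=.
have [x hx] : inMset A by apply: hs; rewrite inE eqxx.
have hs' : forall B, B \in s -> inMset B by move=> B hB; apply: hs; rewrite inE hB orbT.
have hP : nonneg (mprod s).
  apply: mprod_nonneg => B /hs' [y ->]; exact: Mnonneg.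
move=> h; have [k [h1 h2]] := mmul_pos (A := A) (B := mprod s) ltac:(rewrite hx; exact: Mnonneg) hP h.
rewrite hx in h1.
exact: (Tt_step hl h1 (IH hs' _ h2)).
Qed.


Lemma traj_sum (R : realType) m (E : {set 'I_m * 'I_m}) (hl : forall i, (i,i) \in E)
  x (v : idx E -> R) t : \sum_b traj x v t b = \sum_a v a.
Proof.
elim: t => [//|t IH] /=; rewrite vmul_sum // => a; exact: Mof_row1.
Qed.

Lemma traj_ge0 (R : realType) m (E : {set 'I_m * 'I_m}) x (v : idx E -> R) t b :
  (forall a, 0 <= v a) -> 0 <= traj x v t b.
Proof.
move=> hv; elim: t b => [//|t IH] b /=; apply: vmul_ge0 => //; exact: Mnonneg.
Qed.

Lemma traj_lin (R : realType) m (E : {set 'I_m * 'I_m}) x (v w : idx E -> R) k t :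
  traj x (fun a => v a - k * w a) t = (fun b => traj x v t b - k * traj x w t b).
Proof.
elim: t => [//|t IH] /=; by rewrite IH vmul_lin.
Qed.

Lemma traj_norm (R : realType) m (E : {set 'I_m * 'I_m}) (hl : forall i, (i,i) \in E)
  x (v : idx E -> R) t t' : (t <= t')%N ->
  \sum_b `|traj x v t' b| <= \sum_b `|traj x v t b|.
Proof.
elim: t' => [|t' IH]; first by rewrite leqn0 => /eqP ->.
rewrite leq_eqVlt => /orP[/eqP -> //|h].
apply: le_trans (IH h); rewrite /= -[X in _ <= X]mul1r.
apply: vmul_norm; [exact: Mnonneg | move=> a; exact: Mof_row1].
Qed.

Lemma traj_window (R : realType) m (E : {set 'I_m * 'I_m}) (x : nat -> 'I_m * 'I_m -> bool) (v : idx E -> R) t n :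
  (forall j, (j < n)%N -> forall e, e \in E -> x (t + j).+1 e) ->
  traj x v (t + n) = vmul (traj x v t) (mprod (nseq n (R1 R E))).
Proof.
elim: n => [|n IH] hx; first by rewrite addn0 /= vmul_mid.
rewrite addnS mprod_nseqS vmul_mmul -IH; last by move=> j hj; apply: hx; exact: ltnW.
rewrite [LHS]/= (@Mof_true R m E (x (t + n).+1)) //.
by apply: hx.
Qed.


Lemma bigI_mem (T : Type) (G : nat -> set T) (S : seq nat) w :
  (\big[setI/setT]_(j <- S) G j) w <-> (forall j, j \in S -> G j w).
Proof.
elim: S => [|j S IH]; first by rewrite big_nil; split.
rewrite big_cons; split.
  move=> [h1 /IH h2] k; rewrite inE => /orP[/eqP -> //|]; exact: h2.
move=> h; split; first by apply: h; rewrite inE eqxx.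
by apply/IH => k hk; apply: h; rewrite inE hk orbT.
Qed.

Lemma indep_neg (R : realType) (d : measure_display) (T : measurableType d)
  (P : probability T R) (G : nat -> set T) (p : R) :
  (forall j, measurable (G j)) ->
  (forall S, uniq S -> P (\big[setI/setT]_(j <- S) G j) = (p ^+ size S)%:E) ->
  forall F S, uniq F -> uniq S -> (forall j, j \in F -> j \notin S) ->
  P (\big[setI/setT]_(j <- S) G j `&` \big[setI/setT]_(j <- F) ~` G j) =
    (p ^+ size S * (1 - p) ^+ size F)%:E.
Proof.
move=> mG hS; elim=> [|f F IH] S uF uS dFS.
  by rewrite big_nil setIT hS // expr0 mulr1.
have mA : forall S, measurable (\big[setI/setT]_(j <- S) G j).
  by move=> S'; apply: bigsetI_measurable => j _; exact: mG.
have mB : forall F, measurable (\big[setI/setT]_(j <- F) ~` G j).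
  by move=> F'; apply: bigsetI_measurable => j _; exact/measurableC/mG.
move: uF; rewrite /= => /andP[fF uF].
have fS : f \notin S by apply: dFS; rewrite inE eqxx.
have h1 := IH S uF uS (fun j hj => dFS j ltac:(by rewrite inE hj orbT)).
have h2 := IH (f :: S) uF ltac:(by rewrite /= fS uS)
  (fun j hj => ltac:(rewrite inE negb_or (dFS j ltac:(by rewrite inE hj orbT)) andbT;
     by apply/eqP => ej; move: hj; rewrite ej (negbTE fF))).
have DI : forall A B, measurable A -> measurable B -> P A = P (A `\` B) + P (A `&` B).
  by move=> A B mA' mB'; exact: measureDI.
have := DI _ _ (measurableI _ _ (mA S) (mB F)) (mG f).
move=> /(eq_trans (esym h1)) h.
have e1 : (\big[setI/setT]_(j <- S) G j `&` \big[setI/setT]_(j <- F) ~` G j) `&` G f =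
   \big[setI/setT]_(j <- f :: S) G j `&` \big[setI/setT]_(j <- F) ~` G j.
  by rewrite big_cons setIC !setIA.
have e2 : (\big[setI/setT]_(j <- S) G j `&` \big[setI/setT]_(j <- F) ~` G j) `\` G f =
   \big[setI/setT]_(j <- S) G j `&` (~` G f `&` \big[setI/setT]_(j <- F) ~` G j).
  by rewrite setDE setIAC setIA.
rewrite e1 e2 in h; rewrite big_cons.
rewrite h2 in h; move: h.
set x := P _; move=> h.
have -> : x = ((p ^+ size S * (1 - p) ^+ size F) - p ^+ size (f :: S) * (1 - p) ^+ size F)%:E.
  by rewrite EFinB h addeK.
rewrite /= !exprS; congr (_%:E); ring.
Qed.


Lemma geo_small (R : realType) (a r : R) : 0 <= a < 1 -> 0 < r -> exists N, a ^+ N < r.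
Proof.
move=> /andP[a0 a1] r0.
have ha : `|a| < 1 by rewrite ger0_norm.
have := cvg_expr ha.
move/cvgrPdist_lt => /(_ r r0) [N _ hN].
exists N; have := hN N (leqnn N).
by rewrite sub0r normrN ger0_norm ?exprn_ge0.
Qed.

Lemma tail_null (R : realType) (d : measure_display) (T : measurableType d)
  (P : probability T R) (G : nat -> set T) (p : R) :
  (forall j, measurable (G j)) ->
  (forall S, uniq S -> P (\big[setI/setT]_(j <- S) G j) = (p ^+ size S)%:E) ->
  0 < p -> p <= 1 ->
  P.-negligible (\bigcup_J \bigcap_(j in [set j | (J <= j)%N]) ~` G j).
Proof.
move=> mG hS p0 p1; apply: negligible_bigcup => J.
set NJ := \bigcap_(j in _) _.
have mNJ : measurable NJ.
  by apply: bigcap_measurableType => j _; exact/measurableC/mG.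
exists NJ; split => //.
have hle : forall N, (P NJ <= ((1 - p) ^+ N)%:E)%E.
  move=> N; have := indep_neg mG hS (iota_uniq J N) (isT : uniq [::]) (fun j _ => isT).
  rewrite big_nil setTI size_iota /= expr0 mul1r => <-.
  apply: le_measure; rewrite ?inE //.
    by apply: bigsetI_measurable => j _; exact/measurableC/mG.
  move=> w hw; apply/bigI_mem => j; rewrite mem_iota => /andP[hj _]; exact: hw.
have hfin : P NJ = (fine (P NJ))%:E.
  rewrite fineK // ge0_fin_numE ?measure_ge0 //.
  by apply: (le_lt_trans (probability_le1 _ mNJ)); rewrite ltry.
apply: (eq_trans hfin); congr (_%:E); apply/eqP; rewrite eq_le; apply/andP; split; last first.
  by rewrite -lee_fin -hfin measure_ge0.
rewrite leNgt; apply/negP => hr.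
have [N hN] := geo_small (a := 1 - p) (r := fine (P NJ)) ltac:(lra) hr.
have := hle N; rewrite hfin lee_fin => h.
by have := lt_le_trans hN h; rewrite ltxx.
Qed.


Definition TS (l : nat) (S : seq nat) := flatten [seq iota (j * l).+1 l | j <- S].

Lemma memTS l S t : t \in TS l S <-> exists j k, [/\ j \in S, (k < l)%N & t = (j * l + k).+1].
Proof.
split.
  move/flatten_mapP => [j hj]; rewrite mem_iota => /andP[h1 h2].
  exists j, (t - (j * l).+1)%N; split => //; lia.
move=> [j [k [hj hk ->]]]; apply/flatten_mapP; exists j => //.
rewrite mem_iota; apply/andP; split; lia.
Qed.

Lemma uniqTS l S : (0 < l)%N -> uniq S -> uniq (TS l S).
Proof.
move=> l0; elim: S => [//|j S IH] /= /andP[jS uS].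
rewrite cat_uniq iota_uniq IH // andbT; apply/hasPn => t /memTS [j' [k [hj' hk ->]]].
rewrite mem_iota negb_and -!ltnNge.
have : j' != j by apply: contraNneq jS => <-.
case: (ltngtP j' j) => // h _.
  have : (j'.+1 * l <= j * l)%N by rewrite leq_mul2r h orbT.
  rewrite mulSn; move=> hh; apply/orP; left; lia.
have : (j.+1 * l <= j' * l)%N by rewrite leq_mul2r h orbT.
rewrite mulSn; move=> hh; apply/orP; right; lia.
Qed.

Lemma sizeTS l S : size (TS l S) = (size S * l)%N.
Proof. elim: S => [//|j S IH] /=; by rewrite size_cat size_iota IH mulSn. Qed.

Lemma prod_const_seq (R : realType) (I : Type) (r : seq I) (c : R) :
  \prod_(i <- r) c = c ^+ size r.
Proof. elim: r => [|a r IH]; by rewrite ?big_nil ?big_cons ?IH ?exprS. Qed.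

Definition Gw (T : Type) m (E : {set 'I_m * 'I_m}) (X : nat -> 'I_m * 'I_m -> T -> bool)
  (l j : nat) : set T :=
  [set w | forall k, (k < l)%N -> forall e, e \in E -> X (j * l + k).+1 e w].

Lemma Gw_meas (d : measure_display) (T : measurableType d) m (E : {set 'I_m * 'I_m})
  (X : nat -> 'I_m * 'I_m -> T -> bool) l j :
  (forall k e, measurable [set w | X k e w]) -> measurable (Gw E X l j).
Proof.
move=> hm.
have -> : Gw E X l j = \bigcap_(k in [set k | (k < l)%N])
    \bigcap_(e in [set e | e \in E]) [set w | X (j * l + k).+1 e w].
  by apply/seteqP; split => w h k hk e he; apply: h.
apply: bigcap_measurableType => k _; apply: fin_bigcap_measurable; first exact: finite_finset.
by move=> e _; exact: hm.
Qed.



Lemma prod_const_in (R : realType) (I : eqType) (r : seq I) (F : I -> R) c :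
  (forall i, i \in r -> F i = c) -> \prod_(i <- r) F i = c ^+ size r.
Proof.
elim: r => [|a r IH] h; first by rewrite big_nil.
rewrite big_cons exprS h ?IH // ?inE ?eqxx // => i hi; apply: h; by rewrite inE hi orbT.
Qed.

Lemma base_prod (R : realType) (d : measure_display) (T : measurableType d)
  (P : probability T R) m (E : {set 'I_m * 'I_m})
  (q : 'I_m * 'I_m -> R) (X : nat -> 'I_m * 'I_m -> T -> bool) l :
  (0 < l)%N ->
  (forall k e, (0 < k)%N -> e \in E -> P [set w | X k e w] = (q e)%:E) ->
  mutually_independent P [set p : nat * ('I_m * 'I_m) | (0 < p.1)%N /\ p.2 \in E]
    (fun p => X p.1 p.2) ->
  forall S, uniq S -> P (\big[setI/setT]_(j <- S) Gw E X l j) =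
    (((\prod_(e <- enum E) q e) ^+ l) ^+ size S)%:E.
Proof.
move=> l0 hP hind S uS.
set s := [seq (t, e) | t <- TS l S, e <- enum E].
have us : uniq s.
  apply: allpairs_uniq; [exact: uniqTS | exact: enum_uniq |].
  by move=> [a b] [c e] _ _ /= [-> ->].
have Js : forall i, i \in s -> (0 < i.1)%N /\ i.2 \in E.
  move=> i /allpairsP [[t e] [ht he ->]] /=; split; last by rewrite mem_enum in he.
  by have [j [k [_ _ ->]]] := (memTS l S t).1 ht.
have := hind s (fun _ => true) us Js.
have -> : \bigcap_(i in [set` s]) [set w | X i.1 i.2 w = true] =
    \big[setI/setT]_(j <- S) Gw E X l j.
  apply/seteqP; split => w.
    move=> h; apply/bigI_mem => j hj k hk e he.
    apply: (h ((j * l + k).+1, e)); rewrite /=; apply/allpairsP.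
    exists ((j * l + k).+1, e); split => //; last by rewrite mem_enum.
    by apply/memTS; exists j, k.
  move=> /bigI_mem h [t e] /= /allpairsP [[t' e'] [ht he [-> ->]]] /=.
  have [j [k [hj hk ->]]] := (memTS l S t').1 ht.
  by apply: (h j hj k hk); rewrite mem_enum in he.
move=> ->; congr (_%:E).
rewrite big_allpairs.
rewrite -exprM mulnC -sizeTS.
change (\prod_(t <- TS l S) \prod_(e <- enum E) fine (P [set w | X t e w = true]) =
  (\prod_(e <- enum E) q e) ^+ size (TS l S)).
apply: prod_const_in => t ht.
apply: eq_big_seq => e he /=.
have [j [k [_ _ ht']]] := (memTS l S t).1 ht.
have hk : (0 < t)%N by rewrite ht'.
have heE : e \in E by rewrite mem_enum in he.
have := hP t e hk heE => /(f_equal fine) /= <-.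
by [].
Qed.


Lemma le_sum1 (R : realType) (I : finType) (F : I -> R) b :
  (forall a, 0 <= F a) -> F b <= \sum_a F a.
Proof. by move=> h; rewrite (bigD1 b) //= lerDl sumr_ge0. Qed.

Lemma next_hitP (s : nat -> bool) k0 :
  (forall K, exists k, (K <= k)%N /\ s k) -> (k0 <= next_hit s k0)%N /\ s (next_hit s k0).
Proof.
move=> hs; rewrite /next_hit; case: pselect => [h|h].
  by case: ex_minnP => n /andP[h1 h2] _.
exfalso; apply: h; have [k [h1 h2]] := hs k0; exists k; by rewrite h1 h2.
Qed.

Lemma tauP (s : nat -> bool) :
  (forall K, exists k, (K <= k)%N /\ s k) -> forall t, (t <= tau s t)%N /\ s (tau s t).
Proof.
move=> hs; elim=> [|t [IH1 IH2]] /=; first exact: next_hitP.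
have [h1 h2] := next_hitP (tau s t).+1 hs; split => //; exact: leq_trans h1.
Qed.

Lemma det_main (R : realType) m (E : {set 'I_m * 'I_m}) (hl : forall i, (i,i) \in E)
  (y0 z0 : idx E -> R) (muz c : R) (l : nat) (i : 'I_m) (x : nat -> 'I_m * 'I_m -> bool) :
  (forall i, 0 <= y0 (inl i)) -> (forall i, 0 <= z0 (inl i)) ->
  (forall e, y0 (inr e) = 0) -> (forall e, z0 (inr e) = 0) ->
  0 < \sum_j z0 j -> 0 < muz -> muz <= \sum_j z0 j -> 0 < c ->
  (forall x (a b : idx E), 0 < Mof R x a b -> c <= Mof R x a b) ->
  (0 < l)%N ->
  (exists s : seq (idx E -> idx E -> R),
     size s = l /\ (forall A, A \in s -> inMset (E:=E) A) /\
     forall a, 0 < mprod s a (inl i)) ->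
  (forall J, exists j, (J <= j)%N /\
     forall k, (k < l)%N -> forall e, e \in E -> x (j * l + k).+1 e) ->
  let mu := muz * c ^+ l / (#|{: idx E}|)%:R in
  let y := traj x y0 in
  let z := traj x z0 in
  let s := fun k => mu <= z k (inl i) in
  (forall K, exists k, (K <= k)%N /\ s k) /\
  (fun t => y (tau s t) (inl i) / z (tau s t) (inl i)) @ \oo -->
    (\sum_j y0 j) / (\sum_j z0 j).
Proof.
move=> hy0 hz0 hy0e hz0e hsum hmuz hmuz2 c0 hcmin l0 [s0 [hs0 [hs0M hs0p]]] hgood mu y z s.
have z0ge : forall a, 0 <= z0 a by case=> [a|e]; rewrite ?hz0e.
set W := mprod (nseq l (R1 R E)).
have Wnn : nonneg W by exact: R1n_nonneg.
have Wrs : rowsum W 1.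
  apply: mprod_rowsum => A; rewrite mem_nseq => /andP[_ /eqP ->] a; exact: Mof_row1.
set g := c ^+ l.
have g0 : 0 < g by rewrite exprn_gt0.
have Wg : forall a, g <= W a (inl i).
  move=> a; have h := Tt_main hl hs0M (hs0p a); rewrite hs0 in h.
  have := mprod_lb c0 _ h; rewrite size_nseq; apply => A; rewrite mem_nseq => /andP[_ /eqP ->].
  split; first exact: R1_nonneg.
  by move=> a' b'; apply: hcmin.
have g1 : g <= 1.
  apply: le_trans (Wg (inl i)) _; rewrite -(Wrs (inl i)); apply: le_sum1; exact: Wnn.
have hwin : forall j (v : idx E -> R), (forall k, (k < l)%N -> forall e, e \in E -> x (j * l + k).+1 e) ->
    traj x v (j * l + l) = vmul (traj x v (j * l)) W.
  by move=> j v hj; apply: traj_window.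
have jl : forall j, (j <= j * l)%N by move=> j; rewrite leq_pmulr.
have mule : mu <= muz * g.
  rewrite /mu ler_pdivrMr; last by rewrite ltr0n; apply/card_gt0P; exists (inl i).
  rewrite -{1}(mulr1 (muz * g)); apply: ler_wpM2l; first by rewrite mulr_ge0 // ltW.
  rewrite ler1n; apply/card_gt0P; by exists (inl i).
have hits : forall K, exists k, (K <= k)%N /\ s k.
  move=> K; have [j [hKj hj]] := hgood K.
  exists (j * l + l)%N; split; first by apply: leq_trans hKj (leq_trans (jl j) (leq_addr _ _)).
  rewrite /s /z hwin //; apply: le_trans mule _.
  apply: (@le_trans _ _ (\sum_a traj x z0 (j * l) a * g)).
    rewrite -mulr_suml (traj_sum hl); apply: ler_wpM2r => //; exact: ltW.
  apply: ler_sum => a _; apply: ler_wpM2l; first exact: traj_ge0.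
  exact: Wg.
split => //.
have mu0 : 0 < mu.
  rewrite /mu divr_gt0 ?mulr_gt0 // ltr0n; apply/card_gt0P; by exists (inl i).
set pi := (\sum_j y0 j) / (\sum_j z0 j).
set u0 := fun a => y0 a - pi * z0 a.
have hu : forall t, traj x u0 t = fun b => traj x y0 t b - pi * traj x z0 t b.
  by move=> t; rewrite /u0 traj_lin.
have hsu0 : \sum_a u0 a = 0.
  rewrite /u0 sumrB -mulr_sumr /pi divfK ?subrr //; exact: lt0r_neq0.
have hsumu : forall t, \sum_b traj x u0 t b = 0 by move=> t; rewrite (traj_sum hl).
set N := fun t => \sum_b `|traj x u0 t b|.
have N0 : forall t, 0 <= N t by move=> t; apply: sumr_ge0 => b _.
have Nmono : forall t t', (t <= t')%N -> N t' <= N t by move=> t t' h; exact: traj_norm.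
have Ncontr : forall j, (forall k, (k < l)%N -> forall e, e \in E -> x (j * l + k).+1 e) ->
    N (j * l + l)%N <= (1 - g) * N (j * l)%N.
  move=> j hj; rewrite /N hwin //; apply: vmul_contract => //; exact: Wg.
have claim : forall r, exists K, forall k, (K <= k)%N -> N k <= (1 - g) ^+ r * N 0%N.
  elim=> [|r [K hK]].
    by exists 0%N => k _; rewrite expr0 mul1r; apply: Nmono.
  have [j [hKj hj]] := hgood K.
  exists (j * l + l)%N => k hk.
  apply: le_trans (Nmono _ _ hk) _; apply: le_trans (Ncontr j hj) _.
  rewrite exprS -mulrA; apply: ler_wpM2l; first by rewrite subr_ge0.
  apply: hK; exact: leq_trans hKj (jl j).
apply/cvgrPdist_le => e e0.
have N1 : 0 < N 0%N + 1 by have := N0 0%N; lra.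
have hB : 0 < e * mu / (N 0%N + 1) by apply: divr_gt0 => //; apply: mulr_gt0.
have [r hr] := geo_small (a := 1 - g) ltac:(apply/andP; split; [rewrite subr_ge0 // | rewrite ltrBlDr ltrDl //]) hB.
have [K hK] := claim r.
exists K => // t /= hKt.
have [ht1 ht2] := tauP hits t.
set k := tau s t in ht1 ht2 *.
have zk : mu <= z k (inl i) := ht2.
have zk0 : 0 < z k (inl i) := lt_le_trans mu0 zk.
have huk : `|traj x u0 k (inl i)| <= e * mu.
  apply: le_trans (le_sum1 (F := fun b => `|traj x u0 k b|) (inl i) (fun _ => normr_ge0 _)) _.
  apply: le_trans (hK k (leq_trans hKt ht1)) _.
  apply: le_trans (_ : e * mu / (N 0%N + 1) * N 0%N <= _).
    by apply: ler_wpM2r => //; exact: ltW.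
  rewrite mulrAC ler_pdivrMr //.
  apply: ler_wpM2l; first by rewrite mulr_ge0 // ltW.
  by rewrite lerDl ler01.
have -> : pi - y k (inl i) / z k (inl i) = - (traj x u0 k (inl i) / z k (inl i)).
  rewrite hu /y /z /=; field; exact: lt0r_neq0.
rewrite normrN normrM normfV (gtr0_norm zk0) ler_pdivrMr //.
apply: le_trans huk _; apply: ler_wpM2l => //; exact: ltW.
Qed.


Unset Implicit Arguments.

Theorem theorem1 (R : realType) (d : measure_display) (T : measurableType d)
  (P : probability T R) (m : nat) (E : {set 'I_m * 'I_m})
  (q : 'I_m * 'I_m -> R) (X : nat -> 'I_m * 'I_m -> T -> bool)
  (y0 z0 : idx E -> R) (muz c : R) (l : nat) :
  (* graph: self-loops and strong connectivity *)
  (forall i : 'I_m, (i, i) \in E) ->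
  (forall i j : 'I_m, connect (fun a b => (a, b) \in E) i j) ->
  (* random link reliability *)
  (forall e, e \in E -> 0 < q e <= 1) ->
  (forall k e, measurable [set w | X k e w]) ->
  (forall k e, (0 < k)%N -> e \in E -> P [set w | X k e w] = (q e)%:E) ->
  mutually_independent P [set p : nat * ('I_m * 'I_m) | (0 < p.1)%N /\ p.2 \in E]
    (fun p => X p.1 p.2) ->
  (* initial vectors *)
  (forall i, 0 <= y0 (inl i)) -> (forall i, 0 <= z0 (inl i)) ->
  (forall e, y0 (inr e) = 0) -> (forall e, z0 (inr e) = 0) ->
  0 < \sum_j z0 j ->
  (* mu_z *)
  0 < muz -> muz <= \sum_j z0 j ->
  (* c = min of positive entries of matrices in \mathcal{M} *)
  (exists x (a b : idx E), 0 < Mof R x a b /\ Mof R x a b = c) ->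
  (forall x (a b : idx E), 0 < Mof R x a b -> c <= Mof R x a b) ->
  (* l *)
  (0 < l)%N ->
  (forall i : 'I_m, exists s : seq (idx E -> idx E -> R),
     size s = l /\ (forall A, A \in s -> inMset (E:=E) A) /\
     forall a, 0 < mprod s a (inl i)) ->
  forall i : 'I_m,
  let mu := muz * c ^+ l / (#|{: idx E}|)%:R in
  {ae P, forall w,
    let y := traj (fun k e => X k e w) y0 in
    let z := traj (fun k e => X k e w) z0 in
    let s := fun k => mu <= z k (inl i) in
    (forall K, exists k, (K <= k)%N /\ s k) /\
    (fun t => y (tau s t) (inl i) / z (tau s t) (inl i)) @ \oo -->
      (\sum_j y0 j) / (\sum_j z0 j)}.
Proof.
move=> hl hconn hq hmeas hP hind hy0 hz0 hy0e hz0e hsum hmuz hmuz2 [x0 [a0 [b0 [hc0 hc0']]]] hcmin l0 hlpos i mu.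
have c0 : 0 < c by rewrite -hc0'.
set p := (\prod_(e <- enum E) q e) ^+ l.
have hp : 0 < \prod_(e <- enum E) q e <= 1.
  rewrite big_seq; apply: (big_ind (fun v => 0 < v <= 1)) => //.
    by rewrite ltr01 lexx.
  move=> u v /andP[u0 u1] /andP[v0 v1]; apply/andP; split; first exact: mulr_gt0.
  by rewrite mulr_ile1 // ltW.
  by move=> e; rewrite mem_enum => /hq.
have p0 : 0 < p by case/andP: hp => h1 _; exact: exprn_gt0.
have p1 : p <= 1 by case/andP: hp => h1 h2; apply: exprn_ile1 => //; exact: ltW.
have hS := base_prod l0 hP hind.
have neg := tail_null (G := fun j => Gw E X l j) (fun j => @Gw_meas _ _ _ E X l j hmeas) hS p0 p1.
apply: (negligibleS _ neg) => w /= hnQ.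
have [hb|hb] := pselect ((\bigcup_J \bigcap_(j in [set j | (J <= j)%N]) ~` Gw E X l j) w) => //.
exfalso; apply: hnQ.
have hgood : forall J, exists j, (J <= j)%N /\
     forall k, (k < l)%N -> forall e, e \in E -> X (j * l + k).+1 e w.
  move=> J; have [//|h] := pselect (exists j, (J <= j)%N /\ Gw E X l j w).
  exfalso; apply: hb; exists J => // j hj hG; apply: h; by exists j.
exact: (det_main hl hy0 hz0 hy0e hz0e hsum hmuz hmuz2 c0 hcmin l0 (hlpos i) hgood).
Qed.
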